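(* Let $d\ge 2$ and consider the non-linear diagonal network $f_1(\mathbf{x})=s(\mathbf{w}_1\odot\mathbf{x},\mathbf{b}_1)$, $f_2(\mathbf{x})=s(\mathbf{w}_2\odot f_1(\mathbf{x}),\mathbf{b}_2)$ with trainable $\mathbf{w}_1,\mathbf{w}_2,\mathbf{b}_1,\mathbf{b}_2\in\mathbb{R}^d$, trained by gradient flow on $\mathcal{L}_{CL}(f_2)$ for pretraining data with $\phi_1=\phi_2=1$, $\sigma=0$, $\alpha_1=0$, $\alpha_2=1$ (other $\phi_i>0$, $\alpha_i\in[0,1]$ arbitrary). Write $w_{lk}^{(t)}$ for the $k$-th entry of $\mathbf{w}_l$ at time $t$. Suppose that at initialization $\mathbf{b}_1^{(0)}=\mathbf{b}_2^{(0)}=(b_0,\dots,b_0)^\top$ with $b_0>0$, $|w_{22}^{(0)}|\le\sqrt{b_0}$ and $|w_{22}^{(0)}|(|w_{12}^{(0)}|-b_0)\ge b_0$. Then as $t\to\infty$, $\|f_2^{(t)}(\mathbf{e}_2)\|\to 0$, while $\liminf_{t\to\infty}\|f_1^{(t)}(\mathbf{e}_2)\|\ge\sqrt{b_0}$.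
   Context: $s(a,b)=\mathrm{ReLU}(a-b)-\mathrm{ReLU}(-a-b)$ is the symmetrized ReLU, applied entrywise to vectors; $\odot$ is the entrywise product. Pretraining distribution: $\mathbf{x}\in\mathbb{R}^d$ with independent coordinates $x_i$ uniform on $\{-\phi_i,\phi_i\}$. Augmentation $\mathcal{A}(\mathbf{x})$: for each $i$ independently, with probability $\alpha_i$ the sign of $x_i$ is re-randomized (uniform $\pm\phi_i$), otherwise kept; then noise of covariance $\sigma^2\mathbf{I}$ is added (here $\sigma=0$, so no noise). $\mathcal{L}_{CL}(f)=-2\,\mathbb{E}_{\mathbf{x},\,\mathbf{x}_1^+,\mathbf{x}_2^+\sim\mathcal{A}(\mathbf{x})}[f(\mathbf{x}_1^+)^\top f(\mathbf{x}_2^+)]+\mathbb{E}_{\mathbf{x}_1,\mathbf{x}_2\text{ i.i.d.}}[(f(\mathcal{A}(\mathbf{x}_1))^\top f(\mathcal{A}(\mathbf{x}_2)))^2]$, with independent augmentations. Gradient flow: $\frac{d}{dt}\theta^{(t)}=-\nabla_\theta\mathcal{L}_{CL}(f_2)$ for every parameter $\theta$ (with the standard a.e. derivative of ReLU). $\mathbf{e}_2$ is the second standard basis vector. *)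

(* Defs.v *)
From HB Require Import structures.
From mathcomp Require Import all_boot all_order all_algebra.
From mathcomp Require Import all_classical all_reals all_analysis.
Set Implicit Arguments. Unset Strict Implicit. Unset Printing Implicit Defensive.
Import Order.TTheory GRing.Theory Num.Theory.
Import numFieldNormedType.Exports.
Local Open Scope classical_set_scope.
Local Open Scope ring_scope.

Section Defs.
Variables (R : realType) (d : nat).

Definition relu (z : R) : R := Num.max z 0.
Definition drelu (z : R) : R := if 0 < z then 1 else 0.

Definition sym_relu (a b : R) : R := relu (a - b) - relu (- a - b).
Definition dsym_a (a b : R) : R := drelu (a - b) + drelu (- a - b).
Definition dsym_b (a b : R) : R := - drelu (a - b) + drelu (- a - b).

Definition vec := 'I_d -> R.

Definition net1 (w1 b1 : vec) (x : vec) : vec :=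
  fun k => sym_relu (w1 k * x k) (b1 k).
Definition net2 (w1 w2 b1 b2 : vec) (x : vec) : vec :=
  fun k => sym_relu (w2 k * net1 w1 b1 x k) (b2 k).

Inductive pkind := PW1 | PW2 | PB1 | PB2.

Definition dnet2 (w1 w2 b1 b2 : vec) (p : pkind) (j : 'I_d) (x : vec)
  (k : 'I_d) : R :=
  if j == k then
    let a1 := w1 k * x k in
    let h := net1 w1 b1 x k in
    let a2 := w2 k * h in
    match p with
    | PW2 => dsym_a a2 (b2 k) * h
    | PB2 => dsym_b a2 (b2 k)
    | PW1 => dsym_a a2 (b2 k) * w2 k * (dsym_a a1 (b1 k) * x k)
    | PB1 => dsym_a a2 (b2 k) * w2 k * dsym_b a1 (b1 k)
    end
  else 0.

(* data distribution: x_i uniform on {-phi_i, phi_i}, independent *)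
Definition sgnb (s : bool) : R := if s then 1 else -1.
Definition datapt (phi : vec) (s : {ffun 'I_d -> bool}) : vec :=
  fun i => sgnb (s i) * phi i.
Definition pdata : R := (2 ^+ d)^-1.

(* augmentation outcome per coordinate: (resample?, fresh sign);
   resample w.p. alpha_i, fresh sign uniform; sigma = 0 (no noise) *)
Definition augpt (phi : vec) (s : {ffun 'I_d -> bool})
  (a : {ffun 'I_d -> bool * bool}) : vec :=
  fun i => if (a i).1 then sgnb (a i).2 * phi i else sgnb (s i) * phi i.
Definition paug (alpha : vec) (a : {ffun 'I_d -> bool * bool}) : R :=
  \prod_i ((if (a i).1 then alpha i else 1 - alpha i) / 2).

(* E_{x, x1+, x2+ ~ A(x)} [g x1+ x2+] *)
Definition Epos (phi alpha : vec) (g : vec -> vec -> R) : R :=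
  \sum_(s : {ffun 'I_d -> bool}) \sum_(a1 : {ffun 'I_d -> bool * bool})
   \sum_(a2 : {ffun 'I_d -> bool * bool})
    pdata * paug alpha a1 * paug alpha a2 *
      g (augpt phi s a1) (augpt phi s a2).

(* E_{x1, x2 iid} [h (A x1) (A x2)] with independent augmentations *)
Definition Eneg (phi alpha : vec) (h : vec -> vec -> R) : R :=
  \sum_(s1 : {ffun 'I_d -> bool}) \sum_(s2 : {ffun 'I_d -> bool})
   \sum_(a1 : {ffun 'I_d -> bool * bool}) \sum_(a2 : {ffun 'I_d -> bool * bool})
    pdata * pdata * paug alpha a1 * paug alpha a2 *
      h (augpt phi s1 a1) (augpt phi s2 a2).

Definition dotf (w1 w2 b1 b2 : vec) (u v : vec) : R :=
  \sum_k net2 w1 w2 b1 b2 u k * net2 w1 w2 b1 b2 v k.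

Definition loss_CL (phi alpha : vec) (w1 w2 b1 b2 : vec) : R :=
  - 2 * Epos phi alpha (dotf w1 w2 b1 b2)
  + Eneg phi alpha (fun u v => (dotf w1 w2 b1 b2 u v) ^+ 2).

Definition ddotf (w1 w2 b1 b2 : vec) (p : pkind) (j : 'I_d) (u v : vec) : R :=
  \sum_k (dnet2 w1 w2 b1 b2 p j u k * net2 w1 w2 b1 b2 v k
          + net2 w1 w2 b1 b2 u k * dnet2 w1 w2 b1 b2 p j v k).

Definition grad_CL (phi alpha : vec) (w1 w2 b1 b2 : vec) (p : pkind)
  (j : 'I_d) : R :=
  - 2 * Epos phi alpha (ddotf w1 w2 b1 b2 p j)
  + Eneg phi alpha
      (fun u v => 2 * dotf w1 w2 b1 b2 u v * ddotf w1 w2 b1 b2 p j u v).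

Definition gradient_flow (phi alpha : vec) (W1 W2 B1 B2 : R -> vec) : Prop :=
  let traj p := match p with PW1 => W1 | PW2 => W2 | PB1 => B1 | PB2 => B2 end in
  forall (p : pkind) (j : 'I_d),
    (traj p x j : R) @[x --> (0 : R)^'+] --> (traj p 0 j : R) /\
    forall t : R, 0 < t ->
      is_derive t 1 (fun s => traj p s j)
        (- grad_CL phi alpha (W1 t) (W2 t) (B1 t) (B2 t) p j).

Definition vnorm (v : vec) : R := Num.sqrt (\sum_k v k ^+ 2).

Definition basisv (i : 'I_d) : vec := fun k => if k == i then 1 else 0.

End Defs.

(* Main.v *)
Require Import Defs.
From HB Require Import structures.
From mathcomp Require Import all_boot all_order all_algebra.
From mathcomp Require Import all_classical all_reals all_analysis.
From mathcomp Require Import ring lra.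
Import Order.TTheory GRing.Theory Num.Theory.
Import numFieldNormedType.Exports.
Local Open Scope classical_set_scope.
Local Open Scope ring_scope.
Set Implicit Arguments. Unset Strict Implicit. Unset Printing Implicit Defensive.
Section Alg.
Variables (R : realType) (d : nat) (i2 : 'I_d).

Lemma sym_reluN (a b : R) : sym_relu (- a) b = - sym_relu a b.
Proof. by rewrite /sym_relu opprK opprB. Qed.
Lemma dsym_aN (a b : R) : dsym_a (- a) b = dsym_a a b.
Proof. by rewrite /dsym_a opprK addrC. Qed.
Lemma dsym_bN (a b : R) : dsym_b (- a) b = - dsym_b a b.
Proof. by rewrite /dsym_b opprK opprD opprK addrC. Qed.
Lemma sym_relu0 (b : R) : sym_relu 0 b = 0.
Proof. by rewrite /sym_relu oppr0 subrr. Qed.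

Definition negi (x : vec R d) : vec R d :=
  fun i => if i == i2 then - x i else x i.

Lemma net2_negi (w1 w2 b1 b2 x : vec R d) k :
  net2 w1 w2 b1 b2 (negi x) k =
  if k == i2 then - net2 w1 w2 b1 b2 x k else net2 w1 w2 b1 b2 x k.
Proof.
rewrite /net2 /net1 /negi; case: (k == i2) => //.
by rewrite mulrN sym_reluN mulrN sym_reluN.
Qed.

Lemma dnet2_negi (w1 w2 b1 b2 x : vec R d) p k :
  dnet2 w1 w2 b1 b2 p i2 (negi x) k = - dnet2 w1 w2 b1 b2 p i2 x k.
Proof.
rewrite /dnet2 /net1 /negi; case: eqP => [<-|_]; last by rewrite oppr0.
rewrite eqxx.
case: p; rewrite !mulrN !sym_reluN !mulrN ?dsym_aN ?dsym_bN; ring.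
Qed.

Notation F w1 w2 b1 b2 x := (net2 w1 w2 b1 b2 x i2).
Notation D w1 w2 b1 b2 p x := (dnet2 w1 w2 b1 b2 p i2 x i2).

Lemma ddotfE (w1 w2 b1 b2 : vec R d) p u v :
  ddotf w1 w2 b1 b2 p i2 u v =
  D w1 w2 b1 b2 p u * F w1 w2 b1 b2 v + F w1 w2 b1 b2 u * D w1 w2 b1 b2 p v.
Proof.
rewrite /ddotf (bigD1 i2) //= big1 ?addr0 // => k /negPf kn.
by rewrite /dnet2 eq_sym kn !mul0r mulr0 addr0.
Qed.

Definition Rest (w1 w2 b1 b2 : vec R d) (u v : vec R d) :=
  \sum_(k | k != i2) net2 w1 w2 b1 b2 u k * net2 w1 w2 b1 b2 v k.

Lemma dotfE (w1 w2 b1 b2 : vec R d) u v :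
  dotf w1 w2 b1 b2 u v = F w1 w2 b1 b2 u * F w1 w2 b1 b2 v + Rest w1 w2 b1 b2 u v.
Proof. by rewrite /dotf (bigD1 i2). Qed.

Lemma Rest_negi (w1 w2 b1 b2 : vec R d) u v :
  Rest w1 w2 b1 b2 u (negi v) = Rest w1 w2 b1 b2 u v.
Proof. by apply: eq_bigr => k /negPf kn; rewrite net2_negi kn. Qed.

Definition flipa (a : {ffun 'I_d -> bool * bool}) : {ffun 'I_d -> bool * bool} :=
  [ffun i => if i == i2 then ((a i).1, ~~ (a i).2) else a i].

Lemma flipaK : involutive flipa.
Proof.
move=> a; apply/ffunP => i; rewrite !ffunE; case: eqP => // ->.
by rewrite /= negbK; case: (a i2).
Qed.

Lemma sum_flip0 (Phi : {ffun 'I_d -> bool * bool} -> R) :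
  (forall a, Phi (flipa a) = - Phi a) -> \sum_a Phi a = 0.
Proof.
move=> H.
have E : \sum_a Phi a = \sum_a Phi (flipa a).
  exact: (reindex_inj (inv_inj flipaK)).
have : \sum_a Phi a = - \sum_a Phi a.
  by rewrite {1}E -sumrN; apply: eq_bigr => a _; rewrite H.
lra.
Qed.

Lemma paug_flip (alpha : vec R d) a : paug alpha (flipa a) = paug alpha a.
Proof.
by apply: eq_bigr => i _; rewrite ffunE; case: eqP => // ->.
Qed.

Lemma sgnbN b : sgnb R (~~ b) = - sgnb R b.
Proof. by case: b => /=; rewrite ?opprK. Qed.

Lemma augpt_flip (phi : vec R d) s (a : {ffun 'I_d -> bool * bool}) : (a i2).1 ->
  augpt phi s (flipa a) = negi (augpt phi s a).
Proof.
move=> H; apply: funext => i; rewrite /augpt /negi ffunE.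
case: eqP => [->|_] //=; rewrite H sgnbN; ring.
Qed.

Lemma paug0 (alpha : vec R d) (a : {ffun 'I_d -> bool * bool}) : alpha i2 = 1 -> ~~ (a i2).1 -> paug alpha a = 0.
Proof.
move=> al /negPf H; rewrite /paug (bigD1 i2) //= H al subrr mul0r mul0r //.
Qed.

Lemma Epos_odd (phi alpha : vec R d) g : alpha i2 = 1 ->
  (forall u v, g u (negi v) = - g u v) -> Epos phi alpha g = 0.
Proof.
move=> al Hg; rewrite /Epos big1 // => s _; rewrite big1 // => a1 _.
apply: sum_flip0 => a2; rewrite paug_flip.
case H: (a2 i2).1.
  by rewrite augpt_flip // Hg mulrN.
by rewrite (@paug0 alpha a2 al) ?H // mulr0 !mul0r oppr0.
Qed.

Lemma Eneg_odd (phi alpha : vec R d) g : alpha i2 = 1 ->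
  (forall u v, g u (negi v) = - g u v) -> Eneg phi alpha g = 0.
Proof.
move=> al Hg; rewrite /Eneg big1 // => s1 _; rewrite big1 // => s2 _.
rewrite big1 // => a1 _.
apply: sum_flip0 => a2; rewrite paug_flip.
case H: (a2 i2).1.
  by rewrite augpt_flip // Hg mulrN.
by rewrite (@paug0 alpha a2 al) ?H // mulr0 !mul0r oppr0.
Qed.

Lemma Eneg_add (phi alpha : vec R d) g1 g2 :
  Eneg phi alpha (fun u v => g1 u v + g2 u v) = Eneg phi alpha g1 + Eneg phi alpha g2.
Proof.
rewrite /Eneg -big_split; apply: eq_bigr => s1 _.
rewrite -big_split; apply: eq_bigr => s2 _.
rewrite -big_split; apply: eq_bigr => a1 _.
rewrite -big_split; apply: eq_bigr => a2 _.
by rewrite mulrDr.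
Qed.

Lemma sum_paug (alpha : vec R d) : \sum_a paug alpha a = 1.
Proof.
rewrite /paug -(bigA_distr_bigA (fun i (x : bool * bool) =>
   (if x.1 then alpha i else 1 - alpha i) / 2)) /=.
rewrite big1 // => i _.
rewrite -(pair_big xpredT xpredT (fun (x y : bool) =>
   (if (x, y).1 then alpha i else 1 - alpha i) / 2)) /=.
by rewrite !big_bool /=; field.
Qed.

Lemma sum_pdata : \sum_(s : {ffun 'I_d -> bool}) pdata R d = 1.
Proof.
rewrite sumr_const card_ffun card_bool card_ord /pdata -[_ *+ _]mulr_natr natrX.
by rewrite mulVf // expf_neq0 // pnatr_eq0.
Qed.

Lemma Eneg_cst (phi alpha : vec R d) c : Eneg phi alpha (fun _ _ => c) = c.
Proof.
rewrite /Eneg.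
have H1 : forall X, \sum_(a2 : {ffun 'I_d -> bool * bool}) (X * paug alpha a2 * c) = X * c.
  move=> X; rewrite -[RHS]mulr1 -(sum_paug alpha) big_distrr; apply: eq_bigr => a _ /=.
  ring.
under eq_bigr do under eq_bigr do under eq_bigr do rewrite H1.
have H2 : forall X, \sum_(a1 : {ffun 'I_d -> bool * bool}) (X * paug alpha a1 * c) = X * c
  by exact: H1.
under eq_bigr do under eq_bigr do rewrite H2.
have H3 : forall X, \sum_(s : {ffun 'I_d -> bool}) (X * pdata R d * c) = X * c.
  move=> X; rewrite -[RHS]mulr1 -sum_pdata big_distrr; apply: eq_bigr => a _ /=.
  ring.
under eq_bigr do rewrite H3.
rewrite -[RHS]mul1r -sum_pdata big_distrl; apply: eq_bigr => a _ /=; ring.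
Qed.

End Alg.
Section Grad.
Variables (R : realType) (d : nat) (i2 : 'I_d).
Notation F w1 w2 b1 b2 x := (net2 w1 w2 b1 b2 x i2).
Notation D w1 w2 b1 b2 p x := (dnet2 w1 w2 b1 b2 p i2 x i2).

Lemma F_loc (w1 w2 b1 b2 x y : vec R d) : x i2 = y i2 -> F w1 w2 b1 b2 x = F w1 w2 b1 b2 y.
Proof. by rewrite /net2 /net1 => ->. Qed.
Lemma D_loc (w1 w2 b1 b2 x y : vec R d) p : x i2 = y i2 ->
  D w1 w2 b1 b2 p x = D w1 w2 b1 b2 p y.
Proof. by rewrite /dnet2 /net1 eqxx => ->. Qed.

Lemma FD_sign (w1 w2 b1 b2 x : vec R d) p b : x i2 = sgnb R b ->
  F w1 w2 b1 b2 x = sgnb R b * F w1 w2 b1 b2 (basisv R i2) /\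
  D w1 w2 b1 b2 p x = sgnb R b * D w1 w2 b1 b2 p (basisv R i2).
Proof.
have e1 : basisv R i2 i2 = 1 by rewrite /basisv eqxx.
case: b => /= H.
  by rewrite !mul1r (F_loc _ _ _ _ (y := basisv R i2)) ?(D_loc _ _ _ _ p (y := basisv R i2)) ?H.
have Hn : x i2 = negi i2 (basisv R i2) i2 by rewrite /negi eqxx e1 H.
rewrite (F_loc _ _ _ _ Hn) (D_loc _ _ _ _ p Hn) net2_negi dnet2_negi eqxx.
by split; ring.
Qed.

Lemma Eneg_eqw (phi alpha : vec R d) g c : alpha i2 = 1 ->
  (forall s1 s2 (a1 a2 : {ffun 'I_d -> bool * bool}), (a1 i2).1 -> (a2 i2).1 ->
     g (augpt phi s1 a1) (augpt phi s2 a2) = c) -> Eneg phi alpha g = c.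
Proof.
move=> al H; rewrite -[RHS](Eneg_cst phi alpha c) /Eneg.
apply: eq_bigr => s1 _; apply: eq_bigr => s2 _; apply: eq_bigr => a1 _.
apply: eq_bigr => a2 _.
case H1: (a1 i2).1; last by rewrite (@paug0 R d i2 alpha a1 al) ?H1 // mulr0 !mul0r.
case H2: (a2 i2).1; last by rewrite (@paug0 R d i2 alpha a2 al) ?H2 // mulr0 !mul0r.
by rewrite H.
Qed.

Lemma grad_i2 (phi alpha w1 w2 b1 b2 : vec R d) p : phi i2 = 1 -> alpha i2 = 1 ->
  grad_CL phi alpha w1 w2 b1 b2 p i2 =
  4 * F w1 w2 b1 b2 (basisv R i2) ^+ 3 * D w1 w2 b1 b2 p (basisv R i2).
Proof.
move=> ph al; rewrite /grad_CL (@Epos_odd R d i2 phi alpha); last 2 first.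
- exact: al.
- by move=> u v; rewrite !ddotfE net2_negi eqxx dnet2_negi; ring.
have -> : (fun u v => 2 * dotf w1 w2 b1 b2 u v * ddotf w1 w2 b1 b2 p i2 u v) =
  (fun u v => 2 * (F w1 w2 b1 b2 u * F w1 w2 b1 b2 v) * ddotf w1 w2 b1 b2 p i2 u v
      + 2 * Rest i2 w1 w2 b1 b2 u v * ddotf w1 w2 b1 b2 p i2 u v).
  by apply: funext => u; apply: funext => v; rewrite (dotfE i2); ring.
have HR : Eneg phi alpha (fun u v => 2 * Rest i2 w1 w2 b1 b2 u v *
    ddotf w1 w2 b1 b2 p i2 u v) = 0.
  apply: (@Eneg_odd R d i2 phi alpha _ al).
  by move=> u v /=; rewrite Rest_negi !ddotfE net2_negi eqxx dnet2_negi; ring.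
rewrite Eneg_add HR.
rewrite (@Eneg_eqw phi alpha _ (4 * F w1 w2 b1 b2 (basisv R i2) ^+ 3 *
   D w1 w2 b1 b2 p (basisv R i2)) al); first by ring.
move=> s1 s2 a1 a2 h1 h2; rewrite ddotfE.
have H1 : augpt phi s1 a1 i2 = sgnb R (a1 i2).2 by rewrite /augpt h1 ph mulr1.
have H2 : augpt phi s2 a2 i2 = sgnb R (a2 i2).2 by rewrite /augpt h2 ph mulr1.
have [Fu Du] := FD_sign w1 w2 b1 b2 p H1.
have [Fv Dv] := FD_sign w1 w2 b1 b2 p H2.
rewrite Fu Du Fv Dv.
case: (a1 i2).2; case: (a2 i2).2 => /=; ring.
Qed.
End Grad.
Section Region.
Variable R : realType.

Lemma relu_id (z : R) : 0 <= z -> relu z = z.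
Proof. by move=> h; rewrite /relu max_l. Qed.
Lemma relu_0 (z : R) : z <= 0 -> relu z = 0.
Proof. by move=> h; rewrite /relu max_r. Qed.
Lemma drelu_1 (z : R) : 0 < z -> drelu z = 1.
Proof. by move=> h; rewrite /drelu h. Qed.
Lemma drelu_0 (z : R) : z <= 0 -> drelu z = 0.
Proof. by move=> h; rewrite /drelu ltNge h. Qed.
Lemma relu_ge0 (z : R) : 0 <= relu z.
Proof. by rewrite /relu le_max lexx orbT. Qed.

Lemma symL1 (s y b : R) : (s = 1 \/ s = -1) -> 0 <= y -> 0 < b ->
  sym_relu (s * y) b = s * relu (y - b).
Proof.
move=> hs hy hb; rewrite /sym_relu.
case: hs => ->; rewrite ?mul1r ?mulN1r ?opprK.
  by rewrite (relu_0 (_ : - y - b <= 0)) ?subr0 ?mul1r //; lra.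
by rewrite (relu_0 (_ : - y - b <= 0)) ?sub0r //; lra.
Qed.

Lemma symL2 (s y b : R) : (s = 1 \/ s = -1) -> 0 <= y -> 0 < b ->
  dsym_a (s * y) b = drelu (y - b).
Proof.
move=> hs hy hb; rewrite /dsym_a.
case: hs => ->; rewrite ?mul1r ?mulN1r ?opprK.
  by rewrite (drelu_0 (_ : - y - b <= 0)) ?addr0 //; lra.
by rewrite (drelu_0 (_ : - y - b <= 0)) ?add0r //; lra.
Qed.

Lemma symL3 (s y b : R) : (s = 1 \/ s = -1) -> 0 <= y -> 0 < b ->
  dsym_b (s * y) b = - s * drelu (y - b).
Proof.
move=> hs hy hb; rewrite /dsym_b.
case: hs => ->; rewrite ?mul1r ?mulN1r ?opprK.
  by rewrite (drelu_0 (_ : - y - b <= 0)) ?addr0 //; lra.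
by rewrite (drelu_0 (_ : - y - b <= 0)) ?add0r //; lra.
Qed.

Lemma sgn_mul (s1 s2 : R) : (s1 = 1 \/ s1 = -1) -> (s2 = 1 \/ s2 = -1) ->
  (s1 * s2 = 1 \/ s1 * s2 = -1).
Proof. by case=> ->; case=> ->; rewrite ?mulr1 ?mulrN1 ?opprK; auto. Qed.

Variables (d : nat) (i2 : 'I_d).

Lemma region (w1 w2 b1 b2 : vec R d) (s1 s2 p q c1 c2 : R) :
  (s1 = 1 \/ s1 = -1) -> (s2 = 1 \/ s2 = -1) ->
  0 < p -> 0 < q -> 0 < c1 -> 0 < c2 ->
  w1 i2 = s1 * (q + c1) -> w2 i2 = s2 * p -> b1 i2 = c1 -> b2 i2 = c2 ->
  let rho := relu (p * q - c2) in
  let e := basisv R i2 in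
  (net1 w1 b1 e i2 = s1 * q /\
      net2 w1 w2 b1 b2 e i2 = s1 * s2 * rho) /\ [/\
      4 * net2 w1 w2 b1 b2 e i2 ^+ 3 * dnet2 w1 w2 b1 b2 PW1 i2 e i2 = 4 * s1 * rho ^+ 3 * p,
      4 * net2 w1 w2 b1 b2 e i2 ^+ 3 * dnet2 w1 w2 b1 b2 PW2 i2 e i2 = 4 * s2 * rho ^+ 3 * q,
      4 * net2 w1 w2 b1 b2 e i2 ^+ 3 * dnet2 w1 w2 b1 b2 PB1 i2 e i2 = - 4 * rho ^+ 3 * p &
      4 * net2 w1 w2 b1 b2 e i2 ^+ 3 * dnet2 w1 w2 b1 b2 PB2 i2 e i2 = - 4 * rho ^+ 3].
Proof.
move=> hs1 hs2 hp hq hc1 hc2 e1 e2 e3 e4 rho e.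
have ee : e i2 = 1 by rewrite /e /basisv eqxx.
have hn1 : net1 w1 b1 e i2 = s1 * q.
  rewrite /net1 ee mulr1 e1 e3 symL1 //; last by lra.
  by rewrite addrK relu_id // ltW.
have hA : w2 i2 * net1 w1 b1 e i2 = (s1 * s2) * (p * q).
  by rewrite hn1 e2; ring.
have hss := sgn_mul hs1 hs2.
have hF : net2 w1 w2 b1 b2 e i2 = s1 * s2 * rho.
  rewrite /net2 hA e4 symL1 //; apply: mulr_ge0; exact: ltW.
have hda1 : dsym_a (w1 i2 * e i2) (b1 i2) = 1.
  by rewrite ee mulr1 e1 e3 symL2 ?addrK ?drelu_1 //; lra.
have hdb1 : dsym_b (w1 i2 * e i2) (b1 i2) = - s1.
  by rewrite ee mulr1 e1 e3 symL3 ?addrK ?drelu_1 ?mulr1 //; lra.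
have hpq : 0 <= p * q by apply: mulr_ge0; exact: ltW.
have hda2 : dsym_a (w2 i2 * net1 w1 b1 e i2) (b2 i2) = drelu (p * q - c2).
  by rewrite hA e4 symL2.
have hdb2 : dsym_b (w2 i2 * net1 w1 b1 e i2) (b2 i2) = - (s1 * s2) * drelu (p * q - c2).
  by rewrite hA e4 symL3.
have key : rho ^+ 3 * drelu (p * q - c2) = rho ^+ 3.
  rewrite /rho; case: (ltP 0 (p * q - c2)) => h.
    by rewrite drelu_1 // mulr1.
  by rewrite relu_0 // expr0n mul0r.
have s1sq : s1 * s1 = 1 by case: hs1 => ->; ring.
have s2sq : s2 * s2 = 1 by case: hs2 => ->; ring.
rewrite hn1 hF; split => //; split; rewrite /dnet2 eqxx -/e.
- rewrite hda2 hda1 ee e2.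
  transitivity (4 * (s1 * s1) * s1 * ((s2 * s2) * (s2 * s2)) * (rho ^+ 3 * drelu (p * q - c2)) * p);
    first by ring.
  by rewrite key s1sq s2sq; ring.
- rewrite hda2 hn1.
  transitivity (4 * ((s1 * s1) * (s1 * s1)) * ((s2 * s2) * s2) * (rho ^+ 3 * drelu (p * q - c2)) * q);
    first by ring.
  by rewrite key s1sq s2sq; ring.
- rewrite hda2 hdb1 e2.
  transitivity (- 4 * (s1 * s1) * (s1 * s1) * (s2 * s2) * (s2 * s2) * (rho ^+ 3 * drelu (p * q - c2)) * p);
    first by ring.
  by rewrite key s1sq s2sq; ring.
- rewrite hdb2.
  transitivity (- 4 * (s1 * s1) * (s1 * s1) * (s2 * s2) * (s2 * s2) * (rho ^+ 3 * drelu (p * q - c2)));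
    first by ring.
  by rewrite key s1sq s2sq; ring.
Qed.

Lemma vnorm_single (v : vec R d) : (forall k, k != i2 -> v k = 0) -> vnorm v = `|v i2|.
Proof.
move=> H; rewrite /vnorm (bigD1 i2) //= big1 ?addr0 ?sqrtr_sqr //.
by move=> k /H ->; rewrite expr0n.
Qed.

Lemma net1_e (w1 b1 : vec R d) k : k != i2 -> net1 w1 b1 (basisv R i2) k = 0.
Proof. by move=> /negPf h; rewrite /net1 /basisv h mulr0 sym_relu0. Qed.
Lemma net2_e (w1 w2 b1 b2 : vec R d) k : k != i2 -> net2 w1 w2 b1 b2 (basisv R i2) k = 0.
Proof. by move=> h; rewrite /net2 net1_e // mulr0 sym_relu0. Qed.

End Region.
Section Good.
Variable R : realType.

Definition good (f : R -> R) :=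
  f x @[x --> (0 : R)^'+] --> f 0 /\ forall t : R, 0 < t -> derivable f t 1.

Lemma good_contat f (t : R) : good f -> 0 < t -> f x @[x --> t] --> f t.
Proof.
move=> [_ hf] ht; apply: differentiable_continuous.
exact/derivable1_diffP/hf.
Qed.

Lemma good_cont f (a b : R) : good f -> 0 <= a -> a < b -> {within `[a, b], continuous f}.
Proof.
move=> hf ha hab; case: (ltP 0 a) => ha0.
  apply: derivable_within_continuous => x; rewrite in_itv /= => /andP[ax _].
  by apply: hf.2; apply: lt_le_trans ax.
have a0 : a = 0 by apply/eqP; rewrite eq_le ha0 ha.
subst a.
apply/continuous_within_itvP => //; split.
- move=> x; rewrite in_itv /= => /andP[x0 _]; exact: good_contat.
- exact: hf.1.
- exact/cvg_at_left_filter/good_contat.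
Qed.

Lemma good_right f (t : R) : good f -> 0 <= t -> f x @[x --> t^'+] --> f t.
Proof.
move=> hf; rewrite le_eqVlt => /orP[/eqP <-|ht]; first exact: hf.1.
exact/cvg_at_right_filter/good_contat.
Qed.

Lemma good_add f g : good f -> good g -> good (fun x => f x + g x).
Proof.
move=> [f0 fd] [g0 gd]; split; first exact: cvgD.
move=> t ht; exact: derivableD (fd t ht) (gd t ht).
Qed.
Lemma good_sub f g : good f -> good g -> good (fun x => f x - g x).
Proof.
move=> [f0 fd] [g0 gd]; split; first exact: cvgB.
move=> t ht; exact: derivableB (fd t ht) (gd t ht).
Qed.
Lemma good_mul f g : good f -> good g -> good (fun x => f x * g x).
Proof.
move=> [f0 fd] [g0 gd]; split; first exact: cvgM.
move=> t ht; exact: derivableM (fd t ht) (gd t ht).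
Qed.
Lemma good_cst (c : R) : good (fun _ => c).
Proof. split; first exact: cvg_cst. move=> t _; exact: derivable_cst. Qed.
Lemma good_scl (c : R) f : good f -> good (fun x => c * f x).
Proof. by move=> hf; apply: good_mul => //; exact: good_cst. Qed.

Lemma mono_up f df (T a b : R) : good f ->
  (forall t, 0 < t -> t < T -> is_derive t 1 f (df t)) ->
  (forall t, 0 < t -> t < T -> 0 <= df t) -> 0 <= a -> a <= b -> b < T -> f a <= f b.
Proof.
move=> hf hd hpos ha; rewrite le_eqVlt => /orP[/eqP <-//|ab] bT.
have hd' : forall x, x \in `]a, b[ -> is_derive x 1 f (df x).
  move=> x; rewrite in_itv /= => /andP[ax xb].
  apply: hd; [exact: le_lt_trans ax|exact: lt_trans bT].
have [c] := MVT ab hd' (good_cont hf ha ab).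
rewrite in_itv /= => /andP[ac cb] e.
have := hpos c (le_lt_trans ha ac) (lt_trans cb bT).
have : 0 < b - a by rewrite subr_gt0.
move=> h1 h2; rewrite -subr_ge0 e; exact: mulr_ge0 h2 (ltW h1).
Qed.

Lemma mono_down f df (T a b : R) : good f ->
  (forall t, 0 < t -> t < T -> is_derive t 1 f (df t)) ->
  (forall t, 0 < t -> t < T -> df t <= 0) -> 0 <= a -> a <= b -> b < T -> f b <= f a.
Proof.
move=> hf hd hneg ha ab bT.
suff : - f a <= - f b by rewrite lerN2.
refine (@mono_up (fun x => - f x) (fun x => - df x) T a b _ _ _ ha ab bT).
- have -> : (fun x => - f x) = (fun x => -1 * f x) by apply: funext => x; ring.
  exact: good_scl.
- move=> t t0 tT; have := is_deriveN (hd t t0 tT); by [].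
- by move=> t t0 tT; rewrite oppr_ge0; apply: hneg.
Qed.

Lemma left_closed f (T : R) : good f -> 0 < T ->
  (forall t, 0 < t -> t < T -> 0 <= f t) -> 0 <= f T.
Proof.
move=> hf hT H; rewrite leNgt; apply/negP => fT.
have h1 := cvgr_lt (f T) (cvg_at_left_filter (good_contat hf hT)) 0 fT.
have h2 := nbhs_left_gt hT.
have h3 := nbhs_left_lt T.
have : \forall t \near T^'-, False.
  near=> t.
  have hft : f t < 0 by near: t; exact: h1.
  have ht0 : 0 < t by near: t; exact: h2.
  have htT : t < T by near: t; exact: h3.
  by have := H t ht0 htT; lra.
by move/filter_ex => [].
Unshelve. all: by end_near.
Qed.

Lemma right_open f (T : R) : good f -> 0 <= T -> 0 < f T ->
  \forall t \near T^'+, 0 < f t.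
Proof. by move=> hf hT fT; apply: (cvgr_gt (f T) (good_right hf hT)). Qed.

End Good.
Section ODE.
Variables (R : realType) (x1 x2 c1 c2 : R -> R) (s1 s2 b0 : R).
Hypotheses (hs1 : s1 = 1 \/ s1 = -1) (hs2 : s2 = 1 \/ s2 = -1) (hb0 : 0 < b0)
  (g1 : good x1) (g2 : good x2) (g3 : good c1) (g4 : good c2).

Definition pp t := s2 * x2 t.
Definition qq t := s1 * x1 t - c1 t.
Definition gg t := pp t * qq t - c2 t.
Definition rho t := relu (gg t).
Definition OO t := [/\ 0 < pp t, 0 < qq t, 0 < c1 t & 0 < c2 t].

Hypothesis hder : forall t, 0 < t -> OO t ->
  [/\ is_derive t 1 x1 (- (4 * s1 * rho t ^+ 3 * pp t)),
      is_derive t 1 x2 (- (4 * s2 * rho t ^+ 3 * qq t)),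
      is_derive t 1 c1 (4 * rho t ^+ 3 * pp t) &
      is_derive t 1 c2 (4 * rho t ^+ 3)].
Hypotheses (h01 : c1 0 = b0) (h02 : c2 0 = b0) (hp0 : 0 < pp 0) (hq0 : 0 < qq 0)
  (hps : pp 0 <= Num.sqrt b0) (hg0 : b0 <= pp 0 * qq 0).

Let s1sq : s1 * s1 = 1. Proof. by case: hs1 => ->; ring. Qed.
Let s2sq : s2 * s2 = 1. Proof. by case: hs2 => ->; ring. Qed.

Let gp : good pp. Proof. exact: good_scl. Qed.
Let gq : good qq. Proof. exact: good_sub (good_scl _ g1) g3. Qed.
Let ggg : good gg. Proof. exact: good_sub (good_mul gp gq) g4. Qed.

Let rho_ge0 t : 0 <= rho t. Proof. exact: relu_ge0. Qed.

Let dpp t : 0 < t -> OO t -> is_derive t 1 pp (- (4 * rho t ^+ 3 * qq t)).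
Proof.
move=> t0 ot; have [_ h2 _ _] := hder t0 ot.
apply: is_derive_eq (is_deriveZ s2 h2) _.
rewrite /GRing.scale /=. transitivity (- (4 * (s2 * s2) * rho t ^+ 3 * qq t)); first by ring.
by rewrite s2sq; ring.
Qed.

Let dqq t : 0 < t -> OO t -> is_derive t 1 qq (- (8 * rho t ^+ 3 * pp t)).
Proof.
move=> t0 ot; have [h1 _ h3 _] := hder t0 ot.
apply: is_derive_eq (is_deriveB (is_deriveZ s1 h1) h3) _.
rewrite /GRing.scale /=. transitivity (- (4 * (s1 * s1) * rho t ^+ 3 * pp t) - 4 * rho t ^+ 3 * pp t); first by ring.
by rewrite s1sq; ring.
Qed.

Definition dg t := - (4 * rho t ^+ 3 * (qq t ^+ 2 + 2 * pp t ^+ 2 + 1)).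

Let dgg t : 0 < t -> OO t -> is_derive t 1 gg (dg t).
Proof.
move=> t0 ot; have [_ _ _ h4] := hder t0 ot.
apply: is_derive_eq (is_deriveB (is_deriveM (dpp t0 ot) (dqq t0 ot)) h4) _.
rewrite /GRing.scale /= /dg; ring.
Qed.

Let dg_le0 t : dg t <= 0.
Proof.
rewrite /dg oppr_le0; apply: mulr_ge0; first by apply: mulr_ge0 => //; exact: exprn_ge0.
by rewrite -addrA addr_ge0 ?sqr_ge0 // addr_ge0 // mulr_ge0 // sqr_ge0.
Qed.

Lemma ana T : (forall t, 0 <= t -> t < T -> OO t) -> forall t, 0 <= t -> t < T ->
  [/\ b0 <= c1 t, b0 <= c2 t, pp t <= pp 0, qq t <= qq 0 & 0 <= gg t].
Proof.
move=> HO t t0 tT.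
have HO' : forall u, 0 < u -> u < T -> OO u by move=> u u0 uT; apply: HO => //; exact: ltW.
have mg : forall a b, 0 <= a -> a <= b -> b < T -> gg b <= gg a.
  move=> a b ha ab bT; apply: (@mono_down _ gg dg T) => // u u0 uT.
  exact: dgg (HO' u u0 uT).
split.
- rewrite -h01; apply: (@mono_up _ c1 (fun u => 4 * rho u ^+ 3 * pp u) T) => //.
  + by move=> u u0 uT; have [] := hder u0 (HO' u u0 uT).
  + move=> u u0 uT; have [hp _ _ _] := HO' u u0 uT.
    by apply: mulr_ge0; [apply: mulr_ge0 => //; exact: exprn_ge0|exact: ltW].
- rewrite -h02; apply: (@mono_up _ c2 (fun u => 4 * rho u ^+ 3) T) => //.
  + by move=> u u0 uT; have [] := hder u0 (HO' u u0 uT).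
  + by move=> u u0 uT; apply: mulr_ge0 => //; exact: exprn_ge0.
- apply: (@mono_down _ pp (fun u => - (4 * rho u ^+ 3 * qq u)) T) => //.
  + by move=> u u0 uT; exact: dpp (HO' u u0 uT).
  + move=> u u0 uT; have [_ hq _ _] := HO' u u0 uT; rewrite oppr_le0.
    by apply: mulr_ge0; [apply: mulr_ge0 => //; exact: exprn_ge0|exact: ltW].
- apply: (@mono_down _ qq (fun u => - (8 * rho u ^+ 3 * pp u)) T) => //.
  + by move=> u u0 uT; exact: dqq (HO' u u0 uT).
  + move=> u u0 uT; have [hp _ _ _] := HO' u u0 uT; rewrite oppr_le0.
    by apply: mulr_ge0; [apply: mulr_ge0 => //; exact: exprn_ge0|exact: ltW].
- rewrite leNgt; apply/negP => gt0.
  have g00 : 0 <= gg 0 by rewrite /gg h02 subr_ge0.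
  have tpos : 0 < t.
    rewrite lt_neqAle t0 andbT; apply/eqP => e; move: gt0; rewrite -e; lra.
  have [s hs gs] : exists2 s, s \in `[0, t] & gg s = 0.
    apply: IVT; first exact: t0.
      exact: good_cont.
    by rewrite ge_min le_max g00 (ltW gt0) !orbT.
  move: hs; rewrite in_itv /= => /andP[s0 st].
  have slt : s < t by rewrite lt_neqAle st andbT; apply/eqP => e; move: gt0; rewrite -e gs; lra.
  have hd' : forall x, x \in `]s, t[ -> is_derive x 1 gg (dg x).
    move=> x; rewrite in_itv /= => /andP[sx xt].
    have x0 : 0 < x by exact: le_lt_trans sx.
    exact: dgg (HO' x x0 (lt_trans xt tT)).
  have [c] := MVT slt hd' (good_cont ggg s0 slt).
  rewrite in_itv /= => /andP[sc ct] e.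
  have gc : gg c <= 0 by rewrite -gs; apply: mg => //; [exact: ltW|exact: lt_trans ct tT].
  have : dg c = 0 by rewrite /dg /rho relu_0 // expr0n /= mulr0 mul0r oppr0.
  move=> dc0; move: e; rewrite dc0 mul0r gs subr0 => e; move: gt0; rewrite e; lra.
Qed.


Lemma allO t : 0 <= t -> OO t.
Proof.
move=> t0; apply: contrapT => nO.
pose E := [set u : R | 0 <= u /\ ~ OO u].
have Et : E t by split.
have hlb : has_lbound E by exists 0 => u [].
have hne : E !=set0 by exists t.
have hinf : has_inf E by split.
set T := inf E.
have T0 : 0 <= T by apply: lb_le_inf => // u [].
have below : forall u, 0 <= u -> u < T -> OO u.
  move=> u u0 uT; apply: contrapT => nu.
  have : T <= u by apply: (ge_inf hlb); split.
  by rewrite leNgt uT.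
have hI := ana below.
have OT : OO T.
  case: (ltP 0 T) => [Tpos|T0'].
  - have c1T : 0 <= c1 T - b0.
      have gc : good (fun u => c1 u - b0) by exact: good_sub g3 (good_cst _).
      apply: (@left_closed _ (fun u => c1 u - b0) T gc Tpos).
      by move=> u u0 uT /=; have [h _ _ _ _] := hI u (ltW u0) uT; rewrite subr_ge0.
    have c2T : 0 <= c2 T - b0.
      have gc : good (fun u => c2 u - b0) by exact: good_sub g4 (good_cst _).
      apply: (@left_closed _ (fun u => c2 u - b0) T gc Tpos).
      by move=> u u0 uT /=; have [_ h _ _ _] := hI u (ltW u0) uT; rewrite subr_ge0.
    have pT : 0 <= pp T.
      apply: (@left_closed _ pp T gp Tpos) => u u0 uT; have [h _ _ _] := below u (ltW u0) uT; exact: ltW.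
    have qT : 0 <= qq T.
      apply: (@left_closed _ qq T gq Tpos) => u u0 uT; have [_ h _ _] := below u (ltW u0) uT; exact: ltW.
    have gT : 0 <= gg T.
      by apply: (@left_closed _ gg T ggg Tpos) => u u0 uT; have [_ _ _ _ h] := hI u (ltW u0) uT.
    move: gT; rewrite /gg => gT.
    have hpq : 0 < pp T * qq T.
      by move: gT c2T; rewrite !subr_ge0 => h1 h2; exact: lt_le_trans hb0 (le_trans h2 h1).
    split.
    + rewrite lt_neqAle pT andbT; apply/eqP => e; move: hpq; rewrite -e mul0r; by rewrite ltxx.
    + rewrite lt_neqAle qT andbT; apply/eqP => e; move: hpq; rewrite -e mulr0; by rewrite ltxx.
    + move: c1T; rewrite subr_ge0; exact: lt_le_trans.
    + move: c2T; rewrite subr_ge0; exact: lt_le_trans.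
  - have -> : T = 0 by apply/eqP; rewrite eq_le T0 T0'.
    by split => //; rewrite ?h01 ?h02.
have hn : \forall u \near T^'+, OO u.
  have [a b c e] := OT.
  near=> u; split; near: u; apply: right_open => //.
move: hn; rewrite near_withinE => -[e /= e0 He].
have [y Ey yT] := inf_adherent e0 hinf.
have Ty : T <= y := ge_inf hlb Ey.
case: Ey => y0 ny.
case: (eqVneq y T) => [ye|yneq]; first by move: ny; rewrite ye.
apply: ny; apply: He; last by rewrite lt_neqAle eq_sym yneq Ty.
rewrite -/T in yT; rewrite /ball_ /= ltr_norml; apply/andP; split; lra.
Unshelve. all: by end_near.
Qed.

Lemma gmono a b : 0 <= a -> a <= b -> gg b <= gg a.
Proof.
move=> a0 ab; apply: (@mono_down _ gg dg (b + 1)) => //; last by lra.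
move=> u u0 _; exact: dgg u0 (allO (ltW u0)).
Qed.

Lemma inv_all t : 0 <= t -> [/\ OO t, b0 <= c2 t, pp t <= Num.sqrt b0 & 0 <= gg t].
Proof.
move=> t0; have tt1 : t < t + 1 by rewrite ltrDl ltr01.
have [h1 h2 h3 h4 h5] := @ana (t + 1) (fun u u0 _ => allO u0) t t0 tt1.
split => //; [exact: allO|exact: le_trans hps].
Qed.

Lemma q_ge t : 0 <= t -> Num.sqrt b0 <= qq t.
Proof.
move=> t0; have [[hp hq _ _] hc hps' hg] := inv_all t0.
have sq : Num.sqrt b0 ^+ 2 = b0 by rewrite sqr_sqrtr // ltW.
have s0 : 0 < Num.sqrt b0 by rewrite sqrtr_gt0.
move: hg; rewrite /gg => hg.
rewrite leNgt; apply/negP => lt.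
have : pp t * qq t < pp t * Num.sqrt b0 by rewrite ltr_pM2l.
have : pp t * Num.sqrt b0 <= Num.sqrt b0 * Num.sqrt b0 by rewrite ler_pM2r.
rewrite -expr2 sq; lra.
Qed.

Lemma rho_small e : 0 < e -> exists M, 0 <= M /\ forall t, M <= t -> rho t < e.
Proof.
move=> e0.
have g00 : 0 <= gg 0 by have [] := inv_all (lexx 0).
have e3 : 0 < e ^+ 3 by exact: exprn_gt0.
pose M := gg 0 / (4 * e ^+ 3) + 1.
have M0 : 0 < M by rewrite /M; apply: ltr_wpDl => //; apply: divr_ge0 => //; lra.
have gM : gg M < e.
  rewrite ltNge; apply/negP => geM.
  have hd' : forall x, x \in `]0, M[ -> is_derive x 1 gg (dg x).
    move=> x; rewrite in_itv /= => /andP[x0 _]; exact: dgg x0 (allO (ltW x0)).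
  have [c] := MVT M0 hd' (good_cont ggg (lexx 0) M0).
  rewrite in_itv /= => /andP[c0 cM] eq.
  have gc : e <= gg c by apply: le_trans geM (gmono (ltW c0) (ltW cM)).
  have rc : rho c = gg c by rewrite /rho relu_id //; lra.
  have [_ _ _ gMp] := inv_all (ltW M0).
  have r3 : e ^+ 3 <= rho c ^+ 3.
    by rewrite lerXn2r // ?nnegrE ?rc; lra.
  have K : 1 <= qq c ^+ 2 + 2 * pp c ^+ 2 + 1.
    by have := sqr_ge0 (qq c); have := sqr_ge0 (pp c); lra.
  have dgc : dg c <= - (4 * e ^+ 3).
    have AB : e ^+ 3 <= rho c ^+ 3 * (qq c ^+ 2 + 2 * pp c ^+ 2 + 1).
      by apply: le_trans r3 _; rewrite ler_peMr // exprn_ge0.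
    by rewrite /dg lerN2 -mulrA ler_pM2l.
  have : gg M - gg 0 <= - (4 * e ^+ 3) * M.
    by rewrite eq subr0 ler_pM2r.
  have -> : - (4 * e ^+ 3) * M = - gg 0 - 4 * e ^+ 3.
    have ne : 4 * e ^+ 3 != 0 by rewrite gt_eqF // mulr_gt0.
    by rewrite /M; field; rewrite gt_eqF.
  lra.
exists M; split; first exact: ltW.
move=> t Mt; have [_ _ _ gt] := inv_all (le_trans (ltW M0) Mt).
rewrite /rho relu_id //; apply: le_lt_trans gM; exact: gmono (ltW M0) Mt.
Qed.

Lemma ode_main : (forall t, 0 <= t -> OO t /\ Num.sqrt b0 <= qq t) /\
  (forall e, 0 < e -> exists M, 0 <= M /\ forall t, M <= t -> rho t < e).
Proof.
split; [move=> t t0; split; [exact: allO | exact: q_ge]|exact: rho_small].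
Qed.
End ODE.

Unset Implicit Arguments. Set Strict Implicit. Set Printing Implicit Defensive.
Theorem theorem3p8 (R : realType) (d : nat) (i1 i2 : 'I_d)
  (phi alpha : 'I_d -> R) (b0 : R) (W1 W2 B1 B2 : R -> 'I_d -> R) :
  (2 <= d)%N -> nat_of_ord i1 = 0%N -> nat_of_ord i2 = 1%N ->
  (forall i, 0 < phi i) -> (forall i, 0 <= alpha i <= 1) ->
  phi i1 = 1 -> phi i2 = 1 -> alpha i1 = 0 -> alpha i2 = 1 ->
  gradient_flow phi alpha W1 W2 B1 B2 ->
  0 < b0 ->
  (forall k, B1 0 k = b0) -> (forall k, B2 0 k = b0) ->
  `|W2 0 i2| <= Num.sqrt b0 ->
  `|W2 0 i2| * (`|W1 0 i2| - b0) >= b0 ->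
  (fun t => vnorm (net2 (W1 t) (W2 t) (B1 t) (B2 t) (basisv R i2)))
     x @[x --> +oo] --> 0
  /\
  (limf_einf (fun t => (vnorm (net1 (W1 t) (B1 t) (basisv R i2)))%:E) (pinfty_nbhs R)
     >= (Num.sqrt b0)%:E)%E.
Proof.
move=> _ _ _ _ _ _ ph2 _ al2 hgf hb0 hB1 hB2 hw2 hw.
pose x1 t := W1 t i2; pose x2 t := W2 t i2; pose c1 t := B1 t i2; pose c2 t := B2 t i2.
have [r1 d1] := hgf PW1 i2.
have [r2 d2] := hgf PW2 i2.
have [r3 d3] := hgf PB1 i2.
have [r4 d4] := hgf PB2 i2.
simpl in r1, r2, r3, r4, d1, d2, d3, d4.
have G1 : good x1 by split => // t t0; have [] := d1 t t0.
have G2 : good x2 by split => // t t0; have [] := d2 t t0.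
have G3 : good c1 by split => // t t0; have [] := d3 t t0.
have G4 : good c2 by split => // t t0; have [] := d4 t t0.
pose s1 : R := if 0 <= x1 0 then 1 else -1.
pose s2 : R := if 0 <= x2 0 then 1 else -1.
have hs1 : s1 = 1 \/ s1 = -1 by rewrite /s1; case: ifP; auto.
have hs2 : s2 = 1 \/ s2 = -1 by rewrite /s2; case: ifP; auto.
have s1sq : s1 * s1 = 1 by case: hs1 => ->; ring.
have s2sq : s2 * s2 = 1 by case: hs2 => ->; ring.
have sx1 : s1 * x1 0 = `|x1 0|.
  rewrite /s1; case: ifP => h; first by rewrite mul1r ger0_norm.
  by rewrite mulN1r ler0_norm // ltW // ltNge h.
have sx2 : s2 * x2 0 = `|x2 0|.
  rewrite /s2; case: ifP => h; first by rewrite mul1r ger0_norm.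
  by rewrite mulN1r ler0_norm // ltW // ltNge h.
have P0 : pp x2 s2 0 = `|W2 0 i2| by rewrite /pp sx2.
have Q0 : qq x1 c1 s1 0 = `|W1 0 i2| - b0 by rewrite /qq sx1 /c1 hB1.
have hp0 : 0 < pp x2 s2 0.
  rewrite P0 lt_neqAle normr_ge0 andbT; apply/eqP => e; move: hw; rewrite -e mul0r.
  by rewrite leNgt hb0.
have hq0 : 0 < qq x1 c1 s1 0.
  rewrite Q0 ltNge; apply/negP => h; move: hw; rewrite leNgt => /negP; apply.
  apply: le_lt_trans hb0; exact: mulr_ge0_le0 (normr_ge0 _) h.
have hreg : forall t, 0 <= t -> OO x1 x2 c1 c2 s1 s2 t -> _ := fun t _ H =>
  let: And4 hp hq hc1 hc2 := H in
  @region R d i2 (W1 t) (W2 t) (B1 t) (B2 t) s1 s2 (pp x2 s2 t) (qq x1 c1 s1 t) (c1 t) (c2 t)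
    hs1 hs2 hp hq hc1 hc2
    (etrans (esym (mul1r _)) (etrans (congr1 (fun z => z * _) (esym s1sq))
      (etrans (esym (mulrA _ _ _)) (congr1 (fun z => s1 * z) (esym (subrK (c1 t) _))))))
    (etrans (esym (mul1r _)) (etrans (congr1 (fun z => z * _) (esym s2sq)) (esym (mulrA _ _ _))))
    erefl erefl.
have hder : forall t, 0 < t -> OO x1 x2 c1 c2 s1 s2 t ->
  [/\ is_derive t 1 x1 (- (4 * s1 * rho x1 x2 c1 c2 s1 s2 t ^+ 3 * pp x2 s2 t)),
      is_derive t 1 x2 (- (4 * s2 * rho x1 x2 c1 c2 s1 s2 t ^+ 3 * qq x1 c1 s1 t)),
      is_derive t 1 c1 (4 * rho x1 x2 c1 c2 s1 s2 t ^+ 3 * pp x2 s2 t) &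
      is_derive t 1 c2 (4 * rho x1 x2 c1 c2 s1 s2 t ^+ 3)].
  move=> t t0 ot; have [_ [gw1 gw2 gb1 gb2]] := hreg t (ltW t0) ot.
  split.
  - by have := d1 t t0; rewrite grad_i2 // gw1.
  - by have := d2 t t0; rewrite grad_i2 // gw2.
  - by have := d3 t t0; rewrite grad_i2 // gb1 !mulNr opprK.
  - by have := d4 t t0; rewrite grad_i2 // gb2 !mulNr opprK.
have hps : pp x2 s2 0 <= Num.sqrt b0 by rewrite P0.
have hg0 : b0 <= pp x2 s2 0 * qq x1 c1 s1 0 by rewrite P0 Q0.
have [hall hlim] := @ode_main R x1 x2 c1 c2 s1 s2 b0 hs1 hs2 hb0 G1 G2 G3 G4 hder
  (hB1 i2) (hB2 i2) hp0 hq0 hps hg0.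
have hv2 : forall t, 0 <= t ->
   vnorm (net2 (W1 t) (W2 t) (B1 t) (B2 t) (basisv R i2)) = rho x1 x2 c1 c2 s1 s2 t.
  move=> t t0; have [ot _] := hall t t0; have [[_ hn2] _] := hreg t t0 ot.
  rewrite (vnorm_single (i2 := i2)); last by move=> k; exact: net2_e.
  rewrite hn2 !normrM (ger0_norm (relu_ge0 _)).
  by case: hs1 => ->; case: hs2 => ->; rewrite ?normrN normr1 !mul1r.
have hv1 : forall t, 0 <= t ->
   vnorm (net1 (W1 t) (B1 t) (basisv R i2)) = qq x1 c1 s1 t.
  move=> t t0; have [ot _] := hall t t0; have [[hn1 _] _] := hreg t t0 ot.
  rewrite (vnorm_single (i2 := i2)); last by move=> k; exact: net1_e.
  have [_ hq _ _] := ot.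
  rewrite hn1 normrM (ger0_norm (ltW hq)).
  by case: hs1 => ->; rewrite ?normrN normr1 mul1r.
split.
- apply/cvgrPdist_lt => e e0.
  have [M [M0 HM]] := hlim e e0.
  exists M; split; first by rewrite num_real.
  move=> t Mt; have t0 : 0 <= t by apply: le_trans M0 (ltW Mt).
  rewrite sub0r normrN hv2 // ger0_norm ?relu_ge0 //.
  exact: HM (ltW Mt).
- rewrite limf_einfE.
  have Hin : [set ereal_inf ((fun t => (vnorm (net1 (W1 t) (B1 t) (basisv R i2)))%:E) @` V)
     | V in pinfty_nbhs R]
     (ereal_inf ((fun t => (vnorm (net1 (W1 t) (B1 t) (basisv R i2)))%:E) @` [set x | 0 < x])).
    by exists [set x | 0 < x] => //; exists 0; split => //; rewrite num_real.
  apply: le_trans (ereal_sup_ubound Hin).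
  apply: le_ereal_inf_tmp; rewrite /lbound /= => _ [t t0 <-].
  rewrite lee_fin (hv1 t (ltW t0)).
  by have [] := hall t (ltW t0).
Qed.
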